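(* Let $V$ be a Whittaker module of type $\eta$ over $R$ with cyclic Whittaker vector $w$, and let \[ X=\{v\in R(F,H) : (x\bullet v)w=0 \text{ for all } x\in R(E)\}. \] Then $X=\tilde A\,W_V(F,H)+W(F,H)$, where $\tilde A\,W_V(F,H)$ is the linear span of products $ab$ with $a\in\tilde A$, $b\in W_V(F,H)$. Moreover $R_w(F,H)\subseteq X$ and $R_w(F,H)=\tilde A\,W_V(F,H)$.
   Context: Let $f\in\mathbb{C}[H]$ be a polynomial. $R=R(f)$ is the associative $\mathbb{C}$-algebra generated by $E,F,H$ with relations $EF-FE=f(H)$, $HE-EH=E$, $HF-FH=-F$; the monomials $F^iH^jE^k$ form a basis of $R$. $Z(R)$ is the center of $R$ (equal to $\mathbb{C}[\Omega]$, $\Omega=2FE+u(H+1)$ where $f(H)=\tfrac12(u(H+1)-u(H))$). Let $R(E)=\mathbb{C}[E]$, $R(F,H)$ the subalgebra generated by $F,H$, and $\tilde A=\mathbb{C}[H]$ the subalgebra generated by $H$. Fix an algebra homomorphism $\eta:R(E)\to\mathbb{C}$ with $\eta(E)\neq0$ and let $R_\eta(E)=\ker\eta$. Then $R=R(F,H)\oplus R\,R_\eta(E)$; for $u\in R$, $u^\eta$ denotes its $R(F,H)$-component. $W(F,H)=\{z^\eta:z\in Z(R)\}$. The $\eta$-reduced action is $x\bullet v=(xv)^\eta-\eta(x)v$ for $x\in R(E)$, $v\in R(F,H)$. A vector $v$ of an $R$-module $V$ is a Whittaker vector of type $\eta$ if $Ev=\eta(E)v$; $V$ is a Whittaker module of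 type $\eta$ with cyclic Whittaker vector $w$ if $w$ is a Whittaker vector and $V=Rw$. $Z_V=\mathrm{Ann}_R(V)\cap Z(R)$, $W_V(F,H)=\{z^\eta: z\in Z_V\}$, $R_w=\mathrm{Ann}_R(w)$ and $R_w(F,H)=R_w\cap R(F,H)$. *)

(* Defs.v *)
(* The base field C is taken to be  R[i]  (mathcomp-real_closed
   complex numbers) for an arbitrary  R : realType  (a complete archimedean
   ordered field, i.e. the real numbers); hence R[i] is the field of complex
   numbers. *)
From HB Require Import structures.
From mathcomp Require Import all_boot all_order all_algebra.
From mathcomp Require Import reals.
From mathcomp Require Import complex.
Set Implicit Arguments. Unset Strict Implicit. Unset Printing Implicit Defensive.
Import Order.TTheory GRing.Theory Num.Theory.
Local Open Scope ring_scope.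

Section GWA.
Variable (C : fieldType) (A : algType C).

Definition peval (p : {poly C}) (x : A) : A := horner_alg x p.

Definition mono (E F H : A) (i j k : nat) : A := F ^+ i * H ^+ j * E ^+ k.

Definition mono_basis (E F H : A) : Prop :=
  (forall x : A, exists (n : nat) (c : 'I_n -> C) (t : 'I_n -> nat * nat * nat),
      x = \sum_(l < n) c l *: mono E F H (t l).1.1 (t l).1.2 (t l).2) /\
  (forall (n : nat) (c : 'I_n -> C) (t : 'I_n -> nat * nat * nat),
      injective t ->
      \sum_(l < n) c l *: mono E F H (t l).1.1 (t l).1.2 (t l).2 = 0 ->
      forall l, c l = 0).

(* A is (a copy of) the algebra R(f): generated by E, F, H subject to
   EF - FE = f(H), HE - EH = E, HF - FH = -F, with PBW basis F^i H^j E^k. *)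
Definition is_Rf (f : {poly C}) (E F H : A) : Prop :=
  [/\ E * F - F * E = peval f H,
      H * E - E * H = E,
      H * F - F * H = - F &
      mono_basis E F H].

Definition central (z : A) : Prop := forall y : A, z * y = y * z.

Definition lspan (P : A -> Prop) (x : A) : Prop :=
  exists (n : nat) (c : 'I_n -> C) (y : 'I_n -> A),
    (forall l, P (y l)) /\ x = \sum_(l < n) c l *: y l.

Definition subalg_closed_set (S : A -> Prop) : Prop :=
  [/\ S 1, (forall x y, S x -> S y -> S (x + y)),
      (forall (c : C) x, S x -> S (c *: x)) &
      (forall x y, S x -> S y -> S (x * y))].

Definition RFH (F H : A) (x : A) : Prop :=
  forall S : A -> Prop, subalg_closed_set S -> S F -> S H -> S x.

Definition Atilde (H : A) (x : A) : Prop := exists p : {poly C}, x = peval p H.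

(* The eta homomorphism R(E) = C[E] -> C is determined by a = eta(E):
   eta(p(E)) = p(a).  R_eta(E) = ker eta = { p(E) : p(a) = 0 }. *)
Definition Reta (E : A) (a : C) (x : A) : Prop :=
  exists p : {poly C}, p.[a] = 0 /\ x = peval p E.

Definition RReta (E : A) (a : C) : A -> Prop :=
  lspan (fun x => exists r k, Reta E a k /\ x = r * k).

(* v = u^eta : v is the R(F,H)-component of u in R = R(F,H) (+) R R_eta(E). *)
Definition eta_part (E F H : A) (a : C) (u v : A) : Prop :=
  RFH F H v /\ RReta E a (u - v).

Definition Wset (E F H : A) (a : C) (v : A) : Prop :=
  exists z, central z /\ eta_part E F H a z v.

Variable V : lmodType A.

Definition annV (r : A) : Prop := forall v : V, r *: v = 0.

Definition WVset (E F H : A) (a : C) (v : A) : Prop :=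
  exists z, (central z /\ annV z) /\ eta_part E F H a z v.

Definition whittaker_vector (E : A) (a : C) (w : V) : Prop := E *: w = a%:A *: w.
Definition cyclic_whittaker (E : A) (a : C) (w : V) : Prop :=
  whittaker_vector E a w /\ forall v : V, exists r : A, v = r *: w.

Definition RwFH (F H : A) (w : V) (x : A) : Prop := RFH F H x /\ x *: w = 0.

Definition AWV (E F H : A) (a : C) : A -> Prop :=
  lspan (fun x => exists a' b, Atilde H a' /\ WVset E F H a b /\ x = a' * b).

(* The set X = { v in R(F,H) : (x . v) w = 0 for all x in R(E) },
   with x . v = (x v)^eta - eta(x) v and x = p(E), eta(x) = p(a). *)
Definition Xset (E F H : A) (a : C) (w : V) (v : A) : Prop :=
  RFH F H v /\
  forall (p : {poly C}) (u : A), eta_part E F H a (peval p E * v) u ->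
    (u - p.[a] *: v) *: w = 0.

End GWA.

(* Main.v *)
Require Import Defs.
From HB Require Import structures.
From mathcomp Require Import all_boot all_order all_algebra.
From mathcomp Require Import reals.
From mathcomp Require Import complex.
From mathcomp Require Import ring.
Set Implicit Arguments. Unset Strict Implicit. Unset Printing Implicit Defensive.
Import Order.TTheory GRing.Theory Num.Theory.
Local Open Scope ring_scope.

Section Polys.
Variable K : numFieldType.
Implicit Types p q : {poly K}.

Lemma sizeXc (c : K) n : size (('X - c%:P)^+n) = n.+1.
Proof. exact: size_exp_XsubC. Qed.

Lemma coefXc_top (c : K) n : (('X - c%:P)^+n)`_n = 1.
Proof.
have m := monic_exp n (monicXsubC c).
by move/monicP: m; rewrite lead_coefE sizeXc.
Qed.

Lemma coefXc_hi (c : K) (n j : nat) : (n < j)%N -> (('X - c%:P)^+n)`_j = 0.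
Proof.
move=> h; have hs : (size (('X - c%:P)^+n) <= n.+1)%N by rewrite sizeXc.
exact: (elimT (leq_sizeP _ _) hs).
Qed.

Lemma coefXc_sub (c : K) n : (('X - c%:P)^+n.+1)`_n = - (n.+1%:R * c).
Proof.
elim: n => [|n IH]; first by rewrite expr1 coefB coefX coefC /= sub0r mul1r.
rewrite exprSr mulrBr coefB coefMX coefMC /= IH coefXc_top -[n.+2]addn1 natrD; ring.
Qed.

Definition dlt p := p \Po ('X - 1%:P) - p.

Lemma dltD p q : dlt (p + q) = dlt p + dlt q.
Proof. rewrite /dlt comp_polyD; ring. Qed.
Lemma dltZ (k : K) p : dlt (k *: p) = k *: dlt p.
Proof. by rewrite /dlt comp_polyZ scalerBr. Qed.
Lemma dltB p q : dlt (p - q) = dlt p - dlt q.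
Proof. rewrite /dlt comp_polyB; ring. Qed.

Lemma coef_comp_wide p q (d j : nat) : (size p <= d)%N ->
  (p \Po q)`_j = \sum_(i < d) p`_i * (q ^+ i)`_j.
Proof.
move=> hs; rewrite coef_comp_poly (big_ord_widen _ (fun i => p`_i * (q ^+ i)`_j) hs).
rewrite big_mkcond /=; apply: eq_bigr => i _.
by case: ifP => // /negbT; rewrite -leqNgt => h; rewrite nth_default // mul0r.
Qed.

Lemma dlt_prop p (d : nat) : (size p <= d.+2)%N ->
  (size (dlt p) <= d.+1)%N /\ (dlt p)`_d = - (d.+1%:R) * p`_d.+1.
Proof.
move=> hs.
have key : forall j : nat, (d <= j)%N -> (p \Po ('X - 1%:P))`_j =
   p`_d * (('X - 1%:P)^+d)`_j + p`_d.+1 * (('X - 1%:P)^+d.+1)`_j.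
  move=> j hj; rewrite (coef_comp_wide _ _ hs) !big_ord_recr /=.
  rewrite big1 ?add0r // => i _; rewrite coefXc_hi ?mulr0 //.
  exact: leq_trans (ltn_ord i) hj.
split.
  apply/leq_sizeP => j hj; rewrite /dlt coefB key ?(leq_trans _ hj) //.
  rewrite (coefXc_hi _ (leq_trans (ltnSn d) hj)) mulr0 add0r.
  move: hj; rewrite leq_eqVlt => /orP [/eqP <-|hj].
    by rewrite coefXc_top mulr1 subrr.
  rewrite coefXc_hi // mulr0 nth_default ?subr0 //.
  exact: leq_trans hs hj.
rewrite /dlt coefB key // coefXc_top coefXc_sub; ring.
Qed.

Lemma size_lower p (d : nat) : (size p <= d.+1)%N -> (size (p - p`_d *: 'X^d)%R <= d)%N.
Proof.
move=> hs; apply/leq_sizeP => j hj; rewrite coefB coefZ coefXn.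
move: hj; rewrite leq_eqVlt => /orP [/eqP <-|hj].
  by rewrite eqxx mulr1 subrr.
rewrite nth_default; last exact: leq_trans hs hj.
by rewrite (gtn_eqF hj) mulr0 subr0.
Qed.

Lemma size_top0 p (n : nat) : (size p <= n.+1)%N -> p`_n = 0 -> (size p <= n)%N.
Proof.
move=> hs h0; apply/leq_sizeP => j; rewrite leq_eqVlt => /orP [/eqP <-|hj] //.
by rewrite nth_default //; exact: leq_trans hs hj.
Qed.

Lemma dlt_surj (n : nat) p : (size p <= n)%N -> exists g, dlt g = p.
Proof.
elim: n p => [|n IH] p hs.
  move: hs; rewrite size_poly_leq0 => /eqP ->; exists 0.
  by rewrite /dlt comp_polyC subrr.
have [hsX h1] := @dlt_prop ('X^(n.+1)) n (eq_leq (size_polyXn _ _)).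
rewrite coefXn eqxx mulr1 in h1.
have hne : (dlt ('X^(n.+1) : {poly K}))`_n != 0.
  by rewrite h1 oppr_eq0 pnatr_eq0.
set k := p`_n / (dlt ('X^(n.+1) : {poly K}))`_n.
have hs' : (size (p - k *: dlt 'X^(n.+1))%R <= n)%N.
  apply: size_top0.
    apply: leq_trans (size_add _ _) _; rewrite geq_max hs /= size_opp.
    exact: leq_trans (size_scale_leq _ _) hsX.
  by rewrite coefB coefZ /k divfK // subrr.
have [g hg] := IH _ hs'.
by exists (g + k *: 'X^(n.+1)); rewrite dltD dltZ hg subrK.
Qed.
End Polys.

Section Gen.
Variables (C : fieldType) (A : algType C).
Implicit Types (p q : {poly C}) (x y : A).

Lemma pevalD p q x : peval (p + q) x = peval p x + peval q x.
Proof. by rewrite /peval rmorphD. Qed.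
Lemma pevalB p q x : peval (p - q) x = peval p x - peval q x.
Proof. by rewrite /peval rmorphB. Qed.
Lemma pevalN p x : peval (- p) x = - peval p x.
Proof. by rewrite /peval rmorphN. Qed.
Lemma pevalM p q x : peval (p * q) x = peval p x * peval q x.
Proof. by rewrite /peval rmorphM. Qed.
Lemma pevalC (c : C) x : peval c%:P x = c%:A.
Proof. by rewrite /peval horner_algC. Qed.
Lemma pevalZ (c : C) p x : peval (c *: p) x = c *: peval p x.
Proof. by rewrite -mul_polyC pevalM pevalC mulr_algl. Qed.
Lemma pevalX x : peval 'X x = x.
Proof. by rewrite /peval horner_algX. Qed.
Lemma peval1 x : peval 1 x = 1.
Proof. by rewrite /peval rmorph1. Qed.
Lemma peval0 x : peval 0 x = 0.
Proof. by rewrite /peval rmorph0. Qed.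
Lemma pevalXn n x : peval 'X^n x = x ^+ n.
Proof. by elim: n => [|n IH]; rewrite ?expr0 ?peval1 // exprS pevalM pevalX IH -exprS. Qed.

Lemma peval_ind (P : {poly C} -> Prop) :
  P 0 -> (forall p (c : C), P p -> P (p * 'X + c%:P)) -> forall p, P p.
Proof. by move=> h0 hs p; elim/poly_ind: p. Qed.

Lemma peval_comm p x : peval p x * x = x * peval p x.
Proof.
elim/poly_ind: p => [|p c IH]; first by rewrite peval0 mul0r mulr0.
rewrite pevalD pevalM pevalX pevalC mulrDl mulrDr {1}IH -mulrA.
by rewrite mulr_algl mulr_algr.
Qed.

Lemma shiftL p (c : C) x y : y * x = (x - c%:A) * y ->
  y * peval p x = peval (p \Po ('X - c%:P)) x * y.
Proof.
move=> hxy; elim/poly_ind: p => [|p k IH]; first by rewrite comp_polyC peval0 mulr0 mul0r.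
rewrite comp_polyD comp_polyM comp_polyX comp_polyC !pevalD !pevalM pevalB !pevalC pevalX.
rewrite mulrDr mulrDl mulrA IH -mulrA hxy !mulrA mulr_algl mulr_algr.
by [].
Qed.

Lemma shiftR p (c : C) x y : x * y = y * (x - c%:A) ->
  peval p x * y = y * peval (p \Po ('X - c%:P)) x.
Proof.
move=> hxy; elim/poly_ind: p => [|p k IH]; first by rewrite comp_polyC peval0 mulr0 mul0r.
rewrite comp_polyD comp_polyM comp_polyX comp_polyC !pevalD !pevalM pevalB !pevalC pevalX.
rewrite mulrDl mulrDr -mulrA hxy mulrA IH -!mulrA mulr_algl mulr_algr.
by [].
Qed.


Definition catf {T : Type} (n1 n2 : nat) (f1 : 'I_n1 -> T) (f2 : 'I_n2 -> T) (l : 'I_(n1 + n2)) : T :=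
  match split l with inl i => f1 i | inr j => f2 j end.

Lemma catfL {T : Type} n1 n2 (f1 : 'I_n1 -> T) f2 (i : 'I_n1) : catf f1 f2 (lshift n2 i) = f1 i.
Proof. by rewrite /catf (unsplitK (inl _ i)). Qed.
Lemma catfR {T : Type} n1 n2 (f1 : 'I_n1 -> T) (f2 : 'I_n2 -> T) (i : 'I_n2) : catf f1 f2 (rshift n1 i) = f2 i.
Proof. by rewrite /catf (unsplitK (inr _ i)). Qed.

Section Lspan.
Variable P : A -> Prop.

Lemma lspan0 : lspan P 0.
Proof. by exists 0%N, (fun _ => 0), (fun _ => 0); split; [case | rewrite big_ord0]. Qed.

Lemma lspan_of x : P x -> lspan P x.
Proof. by move=> hx; exists 1%N, (fun _ => 1), (fun _ => x); split => //; rewrite big_ord1 scale1r. Qed.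

Lemma lspanD x y : lspan P x -> lspan P y -> lspan P (x + y).
Proof.
move=> [n1 [c1 [y1 [h1 ->]]]] [n2 [c2 [y2 [h2 ->]]]].
exists (n1 + n2)%N, (catf c1 c2), (catf y1 y2); split.
  by move=> l; rewrite /catf; case: (split l).
by rewrite big_split_ord /=; congr (_ + _); apply: eq_bigr => i _; rewrite ?catfL ?catfR.
Qed.

Lemma lspanZ (k : C) x : lspan P x -> lspan P (k *: x).
Proof.
move=> [n [c [y [h ->]]]]; exists n, (fun l => k * c l), y; split => //.
by rewrite scaler_sumr; apply: eq_bigr => i _; rewrite scalerA.
Qed.

Lemma lspan_sum n (g : 'I_n -> A) : (forall i, lspan P (g i)) -> lspan P (\sum_(i < n) g i).
Proof.
move=> h; elim/big_ind: _ => //; [exact: lspan0 | exact: lspanD].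
Qed.

Lemma lspan_ind (Q : A -> Prop) : Q 0 -> (forall x y, Q x -> Q y -> Q (x + y)) ->
  (forall (k : C) x, Q x -> Q (k *: x)) -> (forall x, P x -> Q x) ->
  forall x, lspan P x -> Q x.
Proof.
move=> h0 hD hZ hP x [n [c [y [h ->]]]].
by elim/big_ind: _ => // i _; apply: hZ; apply: hP.
Qed.
End Lspan.

Section RFHlemmas.
Variables (F H : A).
Lemma RFH1 : RFH F H 1. Proof. by move=> S [h1 _ _ _]. Qed.
Lemma RFH_F : RFH F H F. Proof. by move=> S _ hF _. Qed.
Lemma RFH_H : RFH F H H. Proof. by move=> S _ _ hH. Qed.
Lemma RFHD x y : RFH F H x -> RFH F H y -> RFH F H (x + y).
Proof. by move=> hx hy S hS hF hH; case: (hS) => _ hD _ _; apply: hD; [apply: hx|apply: hy]. Qed.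
Lemma RFHZ (k : C) x : RFH F H x -> RFH F H (k *: x).
Proof. by move=> hx S hS hF hH; case: (hS) => _ _ hZ _; apply: hZ; apply: hx. Qed.
Lemma RFHM x y : RFH F H x -> RFH F H y -> RFH F H (x * y).
Proof. by move=> hx hy S hS hF hH; case: (hS) => _ _ _ hM; apply: hM; [apply: hx|apply: hy]. Qed.
Lemma RFH0 : RFH F H 0.
Proof. by rewrite -(scale0r 1); apply: RFHZ; apply: RFH1. Qed.
Lemma RFHN x : RFH F H x -> RFH F H (- x).
Proof. by move=> hx; rewrite -scaleN1r; apply: RFHZ. Qed.
Lemma RFHB x y : RFH F H x -> RFH F H y -> RFH F H (x - y).
Proof. by move=> hx hy; apply: RFHD => //; apply: RFHN. Qed.
Lemma RFHX x n : RFH F H x -> RFH F H (x ^+ n).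
Proof. by move=> hx; elim: n => [|n IH]; [rewrite expr0; apply: RFH1 | rewrite exprS; apply: RFHM]. Qed.
Lemma RFH_sum n (g : 'I_n -> A) : (forall i, RFH F H (g i)) -> RFH F H (\sum_(i < n) g i).
Proof. by move=> h; elim/big_ind: _ => //; [exact: RFH0 | exact: RFHD]. Qed.
Lemma RFH_alg (k : C) : RFH F H k%:A.
Proof. by apply: RFHZ; apply: RFH1. Qed.
Lemma RFH_peval p : RFH F H (peval p H).
Proof.
elim/poly_ind: p => [|p c IH]; first by rewrite peval0; apply: RFH0.
by rewrite pevalD pevalM pevalX pevalC; apply: RFHD; [apply: RFHM => //; apply: RFH_H | apply: RFH_alg].
Qed.
End RFHlemmas.


Lemma commZ x y (k : C) : GRing.comm x y -> GRing.comm x (k *: y).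
Proof. by rewrite /GRing.comm -scalerAr -scalerAl => ->. Qed.

Lemma central0 : central (0 : A).
Proof. by move=> y; rewrite mul0r mulr0. Qed.
Lemma centralD x y : central x -> central y -> central (x + y).
Proof. by move=> hx hy z; rewrite mulrDl mulrDr hx hy. Qed.
Lemma centralZ (k : C) x : central x -> central (k *: x).
Proof. by move=> hx z; rewrite -scalerAl -scalerAr hx. Qed.
Lemma centralX x n : central x -> central (x ^+ n).
Proof. by move=> hx z; apply/commr_sym; apply: commrX; apply/commr_sym; apply: hx. Qed.
Lemma central_sum n (g : 'I_n -> A) : (forall i, central (g i)) -> central (\sum_(i < n) g i).
Proof. by move=> h; elim/big_ind: _ => //; [exact: central0 | exact: centralD]. Qed.

End Gen.

Section Main.
Variables (R : realType) (A : algType R[i]) (f : {poly R[i]})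
    (E F H : A) (a : R[i]) (V : lmodType A) (w : V).
Hypothesis hR : is_Rf f E F H.
Hypothesis ha : a != 0.
Hypothesis hw : cyclic_whittaker E a w.

Lemma hEF : E * F = F * E + peval f H.
Proof. by case: hR => h _ _ _; rewrite -h addrCA subrr addr0. Qed.
Lemma hEH : E * H = (H - 1%:A) * E.
Proof. by case: hR => _ h _ _; rewrite scale1r mulrBl mul1r -{3}h opprB addrCA subrr addr0. Qed.
Lemma hHF : H * F = F * (H - 1%:A).
Proof. by case: hR => _ _ h _; rewrite scale1r mulrBr mulr1 -h addrCA subrr addr0. Qed.
Lemma hFH : F * H = (H - (-1)%:A) * F.
Proof. by rewrite scaleN1r opprK mulrDl mul1r hHF scale1r mulrBr mulr1 subrK. Qed.

Lemma shE p : E * peval p H = peval (p \Po ('X - 1%:P)) H * E.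
Proof. apply: shiftL; exact: hEH. Qed.
Lemma shF p : F * peval p H = peval (p \Po ('X - (-1)%:P)) H * F.
Proof. apply: shiftL; exact: hFH. Qed.
Lemma shF' p : peval p H * F = F * peval (p \Po ('X - 1%:P)) H.
Proof. apply: shiftR; exact: hHF. Qed.

Definition two : R[i] := 2%:R.
Lemma two_neq0 : two != 0.
Proof. by rewrite /two pnatr_eq0. Qed.


Definition Wh (y : V) := E *: y = a%:A *: y.
Lemma ew : Wh w. Proof. by case: hw. Qed.

Lemma algZ (k : R[i]) (x : A) (u : V) : (k *: x) *: u = k%:A *: (x *: u).
Proof. by rewrite scalerA mulr_algl. Qed.
Lemma algM (k1 k2 : R[i]) (u : V) : (k1 * k2)%:A *: u = k1%:A *: (k2%:A *: u).
Proof. by rewrite scalerA -scalerA mulr_algl. Qed.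
Lemma alg_cancel (k : R[i]) (u : V) : k != 0 -> k%:A *: u = 0 -> u = 0.
Proof.
move=> hk h; have := congr1 (fun z : V => (k^-1%:A : A) *: z) h.
by rewrite -algM mulVf // scale1r scale1r scaler0.
Qed.
Lemma alg_comm (k : R[i]) (x : A) : k%:A * x = x * k%:A.
Proof. by rewrite mulr_algl mulr_algr. Qed.

Lemma peval_wh p y : Wh y -> peval p E *: y = p.[a]%:A *: y.
Proof.
move=> hy; elim/poly_ind: p => [|p c IH]; first by rewrite peval0 horner0 !scale0r.
rewrite pevalD pevalM pevalX pevalC scalerDl -scalerA hy scalerA -alg_comm -scalerA IH -algM hornerMXaddC [p.[a] * a]mulrC.
by rewrite scalerDl scalerDl.
Qed.

Lemma wh_central z : central z -> Wh (z *: w).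
Proof. by move=> hz; rewrite /Wh scalerA -(hz E) -scalerA ew !scalerA alg_comm. Qed.

Lemma RReta_ann x : RReta E a x -> x *: w = 0.
Proof.
move=> hx; apply: (@lspan_ind _ _ _ (fun x : A => x *: w = 0) _ _ _ _ x hx).
- by rewrite scale0r.
- by move=> x1 x2 h1 h2; rewrite scalerDl h1 h2 addr0.
- by move=> k x1 h1; rewrite algZ h1 scaler0.
- move=> x1 [r [k [[p [hp ->]] ->]]].
  by rewrite -scalerA peval_wh ?hp ?scale0r ?scaler0 //; exact: ew.
Qed.

Lemma D_wh y : Wh y -> (E - a%:A) *: y = 0.
Proof. by move=> hy; rewrite scalerBl hy subrr. Qed.

Lemma step_wh p y : Wh y ->
  (E - a%:A) *: (peval p H *: y) = peval (a *: dlt p) H *: y.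
Proof.
move=> hy; rewrite scalerA mulrBl shE scalerBl -scalerA hy scalerA -scalerBl pevalZ /dlt pevalB mulr_algr mulr_algl scalerBr.
by [].
Qed.


Lemma T_wh y (d : nat) (p : {poly R[i]}) : Wh y -> (size p <= d.+1)%N ->
  (E - a%:A) ^+ d *: (peval p H *: y) = ((- a) ^+ d * (d`!)%:R * p`_d)%:A *: y.
Proof.
move=> hy; elim: d p => [|d IH] p hs.
  by rewrite (size1_polyC hs) expr0 scale1r pevalC coefC /= expr0 !mul1r.
rewrite exprSr -scalerA step_wh //.
have [hs1 hc] := dlt_prop hs.
rewrite IH; last exact: leq_trans (size_scale_leq _ _) hs1.
rewrite coefZ hc; congr (_%:A *: y); rewrite factS natrM exprSr; ring.
Qed.

Lemma Reta_lin : Reta E a (E - a%:A).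
Proof. by exists ('X - a%:P); rewrite hornerXsubC subrr pevalB pevalX pevalC. Qed.

Lemma Edecomp x : RFH F H x ->
  exists u1 u2, RFH F H u1 /\ RFH F H u2 /\ E * x = u1 + u2 * E.
Proof.
move=> hx.
pose S := fun x => RFH F H x /\
  exists u1 u2, RFH F H u1 /\ RFH F H u2 /\ E * x = u1 + u2 * E.
suff hS : subalg_closed_set S.
  have hF : S F.
    split; first exact: RFH_F.
    exists (peval f H), F; split; first exact: RFH_peval.
    by split; [exact: RFH_F | rewrite hEF addrC].
  have hH : S H.
    split; first exact: RFH_H.
    exists 0, (H - 1%:A); split; first exact: RFH0.
    split; last by rewrite add0r hEH.
    by apply: RFHB; [exact: RFH_H | exact: RFH_alg].
  by case: (hx S hS hF hH).
split.
- split; first exact: RFH1.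
  exists 0, 1; split; first exact: RFH0.
  by split; [exact: RFH1 | rewrite add0r mulr1 mul1r].
- move=> x1 x2 [hx1 [u1 [u2 [h1 [h2 e1]]]]] [hx2 [u1' [u2' [h1' [h2' e2]]]]].
  split; first exact: RFHD.
  exists (u1 + u1'), (u2 + u2'); split; first exact: RFHD.
  split; first exact: RFHD.
  by rewrite mulrDr e1 e2 mulrDl addrACA.
- move=> k x1 [hx1 [u1 [u2 [h1 [h2 e1]]]]].
  split; first exact: RFHZ.
  exists (k *: u1), (k *: u2); split; first exact: RFHZ.
  split; first exact: RFHZ.
  by rewrite -scalerAr e1 scalerDr scalerAl.
- move=> x1 x2 [hx1 [u1 [u2 [h1 [h2 e1]]]]] [hx2 [u1' [u2' [h1' [h2' e2]]]]].
  split; first exact: RFHM.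
  exists (u1 * x2 + u2 * u1'), (u2 * u2'); split.
    by apply: RFHD; apply: RFHM.
  split; first exact: RFHM.
  by rewrite mulrA e1 mulrDl -[u2 * E * x2]mulrA e2 mulrDr addrA mulrA.
Qed.

Lemma Xset_wh v : Xset E F H a w v -> E *: (v *: w) = a%:A *: (v *: w).
Proof.
move=> [hv hX]; have [u1 [u2 [h1 [h2 hE]]]] := Edecomp hv.
have heta : eta_part E F H a (peval 'X E * v) (u1 + a *: u2).
  split; first by apply: RFHD => //; exact: RFHZ.
  rewrite pevalX hE; apply: lspan_of; exists u2, (E - a%:A); split; first exact: Reta_lin.
  by rewrite opprD addrACA subrr add0r mulrBr mulr_algr.
have h1w := hX _ _ heta.
have h2w := RReta_ann heta.2.
move: h1w h2w; rewrite !scalerBl hornerX pevalX => /eqP; rewrite subr_eq0 => /eqP h1w.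
move/eqP; rewrite subr_eq0 => /eqP h2w.
by rewrite scalerA h2w h1w algZ.
Qed.

Lemma AWV_RFH x : AWV V E F H a x -> RFH F H x.
Proof.
move=> hx; apply: (@lspan_ind _ _ _ (RFH F H) _ _ _ _ x hx).
- exact: RFH0.
- exact: RFHD.
- exact: RFHZ.
- move=> y [a' [b [[q ->] [[z [_ [hb _]]] ->]]]].
  by apply: RFHM => //; exact: RFH_peval.
Qed.

Lemma AWV_ann x : AWV V E F H a x -> x *: w = 0.
Proof.
move=> hx; apply: (@lspan_ind _ _ _ (fun x : A => x *: w = 0) _ _ _ _ x hx).
- by rewrite scale0r.
- by move=> x1 x2 h1 h2; rewrite scalerDl h1 h2 addr0.
- by move=> k x1 h1; rewrite algZ h1 scaler0.
- move=> y [a' [b [_ [[z [[hz hzV] [hb hre]]] ->]]]].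
  have := RReta_ann hre; rewrite scalerBl hzV => /eqP; rewrite sub0r oppr_eq0 => /eqP hb0.
  by rewrite -scalerA hb0 scaler0.
Qed.

Section WithG.

Variable G : {poly R[i]}.
Hypothesis hG : dlt G = - (two *: f).

Definition Om := two *: (F * E) + peval G H.
Definition om := (two * a) *: F + peval G H.

Lemma Om_H : GRing.comm Om H.
Proof.
rewrite /GRing.comm /Om mulrDl mulrDr -scalerAl -scalerAr peval_comm.
congr (_ *: _ + _).
by rewrite [RHS]mulrA hHF -[RHS]mulrA -hEH mulrA.
Qed.



Lemma hGH : two *: peval f H + peval (G \Po ('X - 1%:P)) H = peval G H.
Proof.
have := congr1 (fun p => peval p H) hG; rewrite /= /dlt pevalB pevalN pevalZ.
by move/eqP; rewrite subr_eq => /eqP ->; rewrite addNKr.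
Qed.

Lemma Om_E : GRing.comm Om E.
Proof.
rewrite /GRing.comm /Om -{1}hGH mulrDr -scalerAr mulrA hEF shE.
by rewrite !mulrDl -!scalerAl !scalerDr !addrA.
Qed.

Lemma Om_F : GRing.comm Om F.
Proof.
rewrite /GRing.comm /Om -{2}hGH mulrDl -scalerAl -mulrA hEF shF'.
by rewrite !mulrDr -!scalerAr !scalerDr !addrA !mulrA.
Qed.


Lemma Om_central : central Om.
Proof.
move=> y; case: hR => _ _ _ [hspan _]; have [n [c [t ->]]] := hspan y.
apply: commr_sum => l _; apply: commZ; rewrite /mono.
apply: commrM; first apply: commrM.
- by apply: commrX; apply: Om_F.
- by apply: commrX; apply: Om_H.
- by apply: commrX; apply: Om_E.
Qed.

Lemma Om_sub_om : Om - om = two *: (F * (E - a%:A)).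
Proof.
rewrite /Om /om opprD addrACA subrr addr0 mulrBr mulr_algr scalerBr scalerA.
by [].
Qed.

Lemma Omk k : exists r, Om ^+ k - om ^+ k = r * (E - a%:A).
Proof.
elim: k => [|k [r hr]]; first by exists 0; rewrite !expr0 subrr mul0r.
exists (om ^+ k * (two *: F) + Om * r).
have hO : Om = om + two *: (F * (E - a%:A)) by rewrite -Om_sub_om addrC subrK.
rewrite exprS -[Om ^+ k](subrK (om ^+ k)) hr mulrDr mulrA Om_central.
rewrite [Om * om ^+ k]Om_central {2}hO [om ^+ k * (_ + _)]mulrDr -exprSr scalerAl mulrA.
rewrite [(_ + r * Om) * _]mulrDl.
by rewrite [om ^+ k.+1 + _]addrC addrA addrK addrC.
Qed.


Definition Srep (x : A) := exists N (p : nat -> {poly R[i]}) (e : nat -> nat),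
  x = \sum_(l < N) peval (p l) H * om ^+ e l.

Lemma Srep0 : Srep 0.
Proof. by exists 0%N, (fun _ => 0), (fun _ => 0%N); rewrite big_ord0. Qed.

Lemma Srep1 : Srep 1.
Proof. by exists 1%N, (fun _ => 1), (fun _ => 0%N); rewrite big_ord1 peval1 expr0 mulr1. Qed.

Lemma Srep_add x y : Srep x -> Srep y -> Srep (x + y).
Proof.
move=> [N1 [p1 [e1 ->]]] [N2 [p2 [e2 ->]]].
exists (N1 + N2)%N, (fun l => if (l < N1)%N then p1 l else p2 (l - N1)%N),
  (fun l => if (l < N1)%N then e1 l else e2 (l - N1)%N).
rewrite big_split_ord /=; congr (_ + _); apply: eq_bigr => i _.
  by rewrite ltn_ord.
by rewrite ltnNge leq_addr /= addKn.
Qed.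

Lemma Srep_Z (k : R[i]) x : Srep x -> Srep (k *: x).
Proof.
move=> [N [p [e ->]]]; exists N, (fun l => k *: p l), e.
by rewrite scaler_sumr; apply: eq_bigr => i _; rewrite pevalZ scalerAl.
Qed.

Lemma Srep_H x : Srep x -> Srep (H * x).
Proof.
move=> [N [p [e ->]]]; exists N, (fun l => 'X * p l), e.
by rewrite mulr_sumr; apply: eq_bigr => i _; rewrite pevalM pevalX mulrA.
Qed.

Lemma hFom : F = (two * a)^-1 *: (om - peval G H).
Proof.
rewrite /om addrK scalerA mulVf ?scale1r //.
by rewrite mulf_neq0 // two_neq0.
Qed.

Definition cF := (two * a)^-1.
Definition shp := ('X - (-1)%:P : {poly R[i]}).

Lemma F_term p k : F * (peval p H * om ^+ k) =
  peval (cF *: (p \Po shp)) H * om ^+ k.+1 +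
  peval (- cF *: ((p \Po shp) * G)) H * om ^+ k.
Proof.
rewrite mulrA shF -/shp {1}hFom -/cF !pevalZ pevalM -scalerAr -scalerAl mulrBr mulrBl.
by rewrite -mulrA -exprS scalerBr scaleNr -!scalerAl mulNr -scalerAl.
Qed.

Lemma Srep_F x : Srep x -> Srep (F * x).
Proof.
move=> [N [p [e ->]]]; rewrite mulr_sumr.
rewrite (eq_bigr (fun l : 'I_N => peval (cF *: (p l \Po shp)) H * om ^+ (e l).+1 +
  peval (- cF *: ((p l \Po shp) * G)) H * om ^+ e l)); last by move=> i _; rewrite F_term.
rewrite big_split /=; apply: Srep_add.
  by exists N, (fun l => cF *: (p l \Po shp)), (fun l => (e l).+1).
by exists N, (fun l => - cF *: ((p l \Po shp) * G)), e.
Qed.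

Lemma RFH_Srep x : RFH F H x -> Srep x.
Proof.
move=> hx.
suff hS : subalg_closed_set (fun x => forall y, Srep y -> Srep (x * y)).
  have hSx : forall y, Srep y -> Srep (x * y).
    by apply: (hx _ hS) => y; [apply: Srep_F | apply: Srep_H].
  by rewrite -[x]mulr1; apply: hSx; exact: Srep1.
split.
- by move=> y hy; rewrite mul1r.
- by move=> x1 x2 h1 h2 y hy; rewrite mulrDl; apply: Srep_add; [apply: h1 | apply: h2].
- by move=> k x1 h1 y hy; rewrite -scalerAl; apply: Srep_Z; apply: h1.
- by move=> x1 x2 h1 h2 y hy; rewrite -mulrA; apply: h1; apply: h2.
Qed.


Lemma RFH_om : RFH F H om.
Proof. by apply: RFHD; [apply: RFHZ; apply: RFH_F | apply: RFH_peval]. Qed.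

Lemma omk_w k : om ^+ k *: w = Om ^+ k *: w.
Proof.
have [r hr] := Omk k; apply/eqP; rewrite eq_sym -subr_eq0 -scalerBl hr.
by rewrite -scalerA D_wh ?scaler0 //; exact: ew.
Qed.

Lemma Wh_Omk k : Wh (Om ^+ k *: w).
Proof. by apply: wh_central; apply: centralX; apply: Om_central. Qed.


Lemma annV_of z : central z -> z *: w = 0 -> annV V z.
Proof.
move=> hz h0 u; case: hw => _ /(_ u) [r ->].
by rewrite scalerA hz -scalerA h0 scaler0.
Qed.

Definition vsum N (p : nat -> {poly R[i]}) (e : nat -> nat) :=
  \sum_(l < N) peval (p l) H * om ^+ e l.

Lemma AWV_add x y : AWV V E F H a x -> AWV V E F H a y -> AWV V E F H a (x + y).
Proof. exact: lspanD. Qed.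

Lemma Wset0 : Wset E F H a 0.
Proof.
exists 0; split; first exact: central0.
by split; [exact: RFH0 | rewrite subrr; exact: lspan0].
Qed.

Lemma MI (d : nat) : forall N (p : nat -> {poly R[i]}) (e : nat -> nat),
  (forall l : 'I_N, (size (p l) <= d)%N) ->
  (vsum N p e *: w = 0 -> AWV V E F H a (vsum N p e)) /\
  (E *: (vsum N p e *: w) = a%:A *: (vsum N p e *: w) ->
     exists v1 v2, AWV V E F H a v1 /\ Wset E F H a v2 /\ vsum N p e = v1 + v2).
Proof.
elim: d => [|d IH] N p e hs.
  have hv0 : vsum N p e = 0.
    rewrite /vsum big1 // => l _; have := hs l; rewrite size_poly_leq0 => /eqP ->.
    by rewrite peval0 mul0r.
  rewrite hv0; split=> _; first exact: lspan0.
  exists 0, 0; split; first exact: lspan0.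
  by split; [exact: Wset0 | rewrite addr0].
pose c l := (p l)`_d.
pose Z := \sum_(l < N) c l *: Om ^+ e l.
pose b := \sum_(l < N) c l *: om ^+ e l.
pose p' l := p l - c l *: 'X^d.
have hZc : central Z by apply: central_sum => l; apply: centralZ; apply: centralX; exact: Om_central.
have heta : eta_part E F H a Z b.
  split.
    by apply: RFH_sum => l; apply: RFHZ; apply: RFHX; exact: RFH_om.
  rewrite /Z /b -sumrB; apply: lspan_sum => l; rewrite -scalerBr; apply: lspanZ.
  have [r hr] := Omk (e l); rewrite hr; apply: lspan_of.
  by exists r, (E - a%:A); split => //; exact: Reta_lin.
have hbw : b *: w = Z *: w.
  by rewrite /b /Z !scaler_suml; apply: eq_bigr => l _; rewrite (algZ _ (om ^+ _)) (algZ _ (Om ^+ _)) omk_w.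
have hvw : vsum N p e *: w = \sum_(l < N) peval (p l) H *: (Om ^+ e l *: w).
  by rewrite /vsum scaler_suml; apply: eq_bigr => l _; rewrite -scalerA omk_w.
have hD : (E - a%:A) ^+ d *: (vsum N p e *: w) = ((- a) ^+ d * (d`!)%:R)%:A *: (Z *: w).
  rewrite hvw scaler_sumr /Z scaler_suml scaler_sumr; apply: eq_bigr => l _.
  rewrite T_wh; [by rewrite (algZ _ (Om ^+ _)) algM | exact: Wh_Omk | exact: hs].
have hk : (- a) ^+ d * (d`!)%:R != 0.
  by rewrite mulf_neq0 ?expf_neq0 ?oppr_eq0 // pnatr_eq0 -lt0n fact_gt0.
have hs' : forall l : 'I_N, (size (p' l) <= d)%N by move=> l; apply: size_lower; exact: hs.
have hv : vsum N p e = vsum N p' e + H ^+ d * b.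
  rewrite /vsum /b mulr_sumr -big_split /=; apply: eq_bigr => l _.
  by rewrite /p' pevalB pevalZ pevalXn mulrBl -scalerAl scalerAr subrK.
have key : Z *: w = 0 -> WVset V E F H a b /\ vsum N p' e *: w = vsum N p e *: w.
  move=> hZ0; split; first by exists Z; split => //; split => //; exact: annV_of.
  by rewrite hv scalerDl -scalerA hbw hZ0 scaler0 addr0.
have hAb : Z *: w = 0 -> AWV V E F H a (H ^+ d * b).
  move=> hZ0; apply: lspan_of; exists (H ^+ d), b; split; first by exists 'X^d; rewrite pevalXn.
  by split => //; case: (key hZ0).
split.
  move=> hv0; have hZ0 : Z *: w = 0.
    by apply: (alg_cancel hk); rewrite -hD hv0 scaler0.
  have [hWV hv'w] := key hZ0.
  have [IHa _] := IH N p' e hs'.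
  by rewrite hv; apply: AWV_add; [apply: IHa; rewrite hv'w | exact: hAb].
move=> hwh.
case: (posnP d) => [hd0|hdpos].
  exists 0, b; split; first exact: lspan0.
  split; first by exists Z.
  rewrite add0r /vsum /b /c; apply: eq_bigr => l _.
  have hsl := hs l; rewrite hd0 in hsl *.
  by rewrite {1}(size1_polyC hsl) pevalC mulr_algl.
have hZ0 : Z *: w = 0.
  apply: (alg_cancel hk); rewrite -hD.
  have -> : (E - a%:A) ^+ d = (E - a%:A) ^+ d.-1 * (E - a%:A) by rewrite -exprSr prednK.
  by rewrite -scalerA scalerBl hwh subrr scaler0.
have [hWV hv'w] := key hZ0.
have [_ IHb] := IH N p' e hs'.
have hwh' : E *: (vsum N p' e *: w) = a%:A *: (vsum N p' e *: w) by rewrite hv'w.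
have [v1 [v2 [h1 [h2 h3]]]] := IHb hwh'.
exists (v1 + H ^+ d * b), v2; split; first by apply: AWV_add => //; exact: hAb.
by split => //; rewrite hv h3 addrAC.
Qed.




Lemma mainG :
  [/\ (forall v : A, Xset E F H a w v <->
         exists v1 v2, AWV V E F H a v1 /\ Wset E F H a v2 /\ v = v1 + v2),
      (forall v : A, RwFH F H w v -> Xset E F H a w v) &
      (forall v : A, RwFH F H w v <-> AWV V E F H a v)].
Proof.
split.
- move=> v; split.
    move=> hX; have hwh := Xset_wh hX.
    have [N [p [e hv]]] := RFH_Srep hX.1.
    have hs : forall l : 'I_N, (size (p l) <= \max_(l < N) size (p l))%N.
      by move=> l; apply: (leq_bigmax l).
    have [_ h] := @MI _ N p e hs.
    have e1 : vsum N p e = v by rewrite /vsum -hv.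
    by rewrite e1 in h; apply: h.
  move=> [v1 [v2 [h1 [[z [hz [hr2 hre2]]] ->]]]].
  split; first by apply: RFHD => //; exact: AWV_RFH.
  move=> q u [hu hre].
  have := RReta_ann hre; rewrite scalerBl => /eqP; rewrite subr_eq0 => /eqP hu_w.
  have := RReta_ann hre2; rewrite scalerBl => /eqP; rewrite subr_eq0 => /eqP hv2w.
  have hvw : (v1 + v2) *: w = z *: w by rewrite scalerDl AWV_ann // add0r hv2w.
  rewrite scalerBl -hu_w -scalerA hvw algZ hvw scalerA -(hz (peval q E)) -scalerA.
  by rewrite (peval_wh _ ew) scalerA -alg_comm -scalerA subrr.
- move=> v [hv hv0]; split => // q u [hu hre].
  have := RReta_ann hre; rewrite scalerBl => /eqP; rewrite subr_eq0 => /eqP hu_w.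
  by rewrite scalerBl -hu_w -scalerA hv0 algZ hv0 !scaler0 subrr.
- move=> v; split.
    move=> [hv hv0]; have [N [p [e hvs]]] := RFH_Srep hv.
    have hs : forall l : 'I_N, (size (p l) <= \max_(l < N) size (p l))%N.
      by move=> l; apply: (leq_bigmax l).
    have [h _] := @MI _ N p e hs.
    have e1 : vsum N p e = v by rewrite /vsum -hvs.
    by rewrite e1 in h; apply: h.
  by move=> h; split; [exact: AWV_RFH | exact: AWV_ann].
Qed.

End WithG.
End Main.

Theorem mainTheorem20 (R : realType) (A : algType R[i]) (f : {poly R[i]})
    (E F H : A) (a : R[i]) (V : lmodType A) (w : V) :
  is_Rf f E F H -> a != 0 -> cyclic_whittaker E a w ->
  [/\ (forall v : A, Xset E F H a w v <->
         exists v1 v2, AWV V E F H a v1 /\ Wset E F H a v2 /\ v = v1 + v2),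
      (forall v : A, RwFH F H w v -> Xset E F H a w v) &
      (forall v : A, RwFH F H w v <-> AWV V E F H a v)].
Proof.
move=> hR ha hw.
have [G hG] := dlt_surj (leqnn (size (- (two R *: f)))).
exact: (mainG hR ha hw hG).
Qed.
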